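(* Let $\lambda_1\ge\lambda_2>0$ and $D=\mathrm{diag}(\lambda_1,\lambda_2)$. The critical points of $\widetilde W_{1,0}(\cdot;D)$ on $SO(2)$ are exactly $R^{(1)}=\mathbb I_2$, $R^{(2)}=-\mathbb I_2$, and, in addition when $\lambda_1+\lambda_2>2$, the two rotations $$R^{(3)}_\pm=\begin{pmatrix}\frac{2}{\lambda_1+\lambda_2} & \mp\sqrt{1-\big(\frac{2}{\lambda_1+\lambda_2}\big)^2}\\ \pm\sqrt{1-\big(\frac{2}{\lambda_1+\lambda_2}\big)^2} & \frac{2}{\lambda_1+\lambda_2}\end{pmatrix},$$ with values $\widetilde W_{1,0}(R^{(1)};D)=(\lambda_1-1)^2+(\lambda_2-1)^2$, $\widetilde W_{1,0}(R^{(2)};D)=(\lambda_1+1)^2+(\lambda_2+1)^2$, $\widetilde W_{1,0}(R^{(3)}_\pm;D)=\frac12(\lambda_1-\lambda_2)^2$. Moreover: (i) $R^{(2)}$ is the global maximum of $\widetilde W_{1,0}(\cdot;D)$; (ii) if $\lambda_1+\lambda_2\le2$, $R^{(1)}$ is the global minimum; (iii) if $\lambda_1+\lambda_2>2$, $R^{(3)}_\pm$ are the global minima.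
   Context: $\mathrm{sym}(Y)=\tfrac12(Y+Y^T)$, $\|Y\|^2=\mathrm{tr}(Y^TY)$ (Frobenius norm). For an invertible matrix $G$, $\widetilde W_{1,0}(R;G)=\|\mathrm{sym}(R^TG-\mathbb I_n)\|^2$ for $R\in SO(n)$. *)

(* Defs.v *)
From Stdlib Require Export Reals.
Open Scope R_scope.

Record M2 : Type := mkM2 { a11 : R; a12 : R; a21 : R; a22 : R }.

Definition mmul (A B : M2) : M2 :=
  mkM2 (a11 A * a11 B + a12 A * a21 B) (a11 A * a12 B + a12 A * a22 B)
       (a21 A * a11 B + a22 A * a21 B) (a21 A * a12 B + a22 A * a22 B).
Definition mtr (A : M2) : M2 := mkM2 (a11 A) (a21 A) (a12 A) (a22 A).
Definition madd (A B : M2) : M2 :=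
  mkM2 (a11 A + a11 B) (a12 A + a12 B) (a21 A + a21 B) (a22 A + a22 B).
Definition mscale (k : R) (A : M2) : M2 :=
  mkM2 (k * a11 A) (k * a12 A) (k * a21 A) (k * a22 A).
Definition mopp (A : M2) : M2 := mscale (-1) A.
Definition mid : M2 := mkM2 1 0 0 1.
Definition mdet (A : M2) : R := a11 A * a22 A - a12 A * a21 A.
Definition diag2 (x y : R) : M2 := mkM2 x 0 0 y.

Definition msym (Y : M2) : M2 := mscale (1/2) (madd Y (mtr Y)).
Definition frob2 (Y : M2) : R :=
  a11 Y ^ 2 + a12 Y ^ 2 + a21 Y ^ 2 + a22 Y ^ 2.

Definition inSO2 (Rm : M2) : Prop := mmul (mtr Rm) Rm = mid /\ mdet Rm = 1.

Definition W10 (Rm G : M2) : R :=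
  frob2 (msym (madd (mmul (mtr Rm) G) (mopp mid))).

(* rotation by angle t: the exponential of t * [[0,-1],[1,0]] *)
Definition rot (t : R) : M2 := mkM2 (cos t) (- sin t) (sin t) (cos t).

(* Critical point of f on the manifold SO(2): R in SO(2) and the derivative
   of f along the curve t |-> R rot(t) (which spans the tangent space
   T_R SO(2) = R so(2)) vanishes at t = 0. *)
Definition critical_SO2 (f : M2 -> R) (Rm : M2) : Prop :=
  inSO2 Rm /\ derivable_pt_lim (fun t => f (mmul Rm (rot t))) 0 0.

Definition R3p (l1 l2 : R) : M2 :=
  let c := 2 / (l1 + l2) in mkM2 c (- sqrt (1 - c ^ 2)) (sqrt (1 - c ^ 2)) c.
Definition R3m (l1 l2 : R) : M2 :=
  let c := 2 / (l1 + l2) in mkM2 c (sqrt (1 - c ^ 2)) (- sqrt (1 - c ^ 2)) c.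

(* Main.v *)
Require Import Defs.
From Stdlib Require Import Reals Lra Psatz.
From Coquelicot Require Import Coquelicot.
Open Scope R_scope.
Lemma W10_rot l1 l2 x y : W10 (mkM2 x (-y) y x) (diag2 l1 l2) = (x*l1-1)^2+(x*l2-1)^2 + y^2*(l1-l2)^2/2.
Proof. unfold W10, frob2, msym, madd, mmul, mtr, mopp, mscale, mid, diag2; cbn. field. Qed.
Lemma mul_rot c s t : mmul (mkM2 c (-s) s c) (rot t) = mkM2 (c*cos t - s*sin t) (-(s*cos t + c*sin t)) (s*cos t + c*sin t) (c*cos t - s*sin t).
Proof. unfold mmul, rot; cbn; f_equal; ring. Qed.
Lemma deriv l1 l2 c s : derivable_pt_lim (fun t => W10 (mmul (mkM2 c (-s) s c) (rot t)) (diag2 l1 l2)) 0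
  (-s*(l1+l2)*((l1+l2)*c-2)).
Proof.
  apply is_derive_Reals.
  apply (is_derive_ext (fun t => ((c*cos t - s*sin t)*l1-1)^2+((c*cos t - s*sin t)*l2-1)^2 + (s*cos t + c*sin t)^2*(l1-l2)^2/2)).
  { intro t. rewrite mul_rot, W10_rot. reflexivity. }
  auto_derive; auto. rewrite cos_0, sin_0. change (RinvImpl.Rinv 2) with (/2). field.
Qed.
Lemma so2_form Rm : inSO2 Rm -> Rm = mkM2 (a11 Rm) (-(a21 Rm)) (a21 Rm) (a11 Rm) /\ a11 Rm ^2 + a21 Rm ^2 = 1.
Proof.
  destruct Rm as [a b c d]; unfold inSO2, mmul, mtr, mdet, mid; cbn.
  intros [H Hd]. injection H as H1 H2 H3 H4.
  assert (E : (d-a)^2+(b+c)^2=0) by nra.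
  assert (Ea : (d-a)^2 = 0) by nra. assert (Eb : (b+c)^2 = 0) by nra.
  assert (d = a) by nra. assert (b = -c) by nra. subst. split; [reflexivity| nra].
Qed.
Lemma so2_of c s : c^2+s^2 = 1 -> inSO2 (mkM2 c (-s) s c).
Proof. intro H. unfold inSO2, mmul, mtr, mdet, mid; cbn. split; [f_equal|]; nra. Qed.

Lemma Wform l1 l2 c s : c^2+s^2 = 1 ->
  W10 (mkM2 c (-s) s c) (diag2 l1 l2) = (((l1+l2)*c-2)^2 + (l1-l2)^2)/2.
Proof. intro H. rewrite W10_rot. replace (s^2) with (1-c^2) by lra. field. Qed.

Lemma crit_of l1 l2 c s : c^2+s^2 = 1 -> s*((l1+l2)*c-2) = 0 ->
  critical_SO2 (fun X => W10 X (diag2 l1 l2)) (mkM2 c (-s) s c).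
Proof.
  intros H1 H2. split. apply so2_of; auto.
  assert (E : -s*(l1+l2)*((l1+l2)*c-2) = 0) by (replace (-s*(l1+l2)*((l1+l2)*c-2)) with (-(l1+l2)*(s*((l1+l2)*c-2))) by ring; rewrite H2; ring).
  pose proof (deriv l1 l2 c s) as Hd. rewrite E in Hd. exact Hd.
Qed.

Lemma crit_to l1 l2 c s : l1 + l2 > 0 ->
  critical_SO2 (fun X => W10 X (diag2 l1 l2)) (mkM2 c (-s) s c) -> s*((l1+l2)*c-2) = 0.
Proof.
  intros Hp [_ Hd]. pose proof (deriv l1 l2 c s) as Hd2.
  pose proof (uniqueness_limite _ _ _ _ Hd Hd2) as E.
  assert (E2 : (l1+l2) * (s*((l1+l2)*c-2)) = 0) by nra.
  apply Rmult_integral in E2. destruct E2; [lra|auto].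
Qed.

Lemma mid_eq : mid = mkM2 1 (-0) 0 1.
Proof. unfold mid; f_equal; ring. Qed.
Lemma mopp_mid_eq : mopp mid = mkM2 (-1) (-0) 0 (-1).
Proof. unfold mopp, mscale, mid; cbn; f_equal; ring. Qed.
Lemma R3m_eq l1 l2 : R3m l1 l2 = mkM2 (2/(l1+l2)) (- - sqrt (1 - (2/(l1+l2))^2)) (- sqrt (1 - (2/(l1+l2))^2)) (2/(l1+l2)).
Proof. unfold R3m; cbn; f_equal; ring. Qed.

Lemma R3_facts l1 l2 : l1 + l2 > 2 ->
  let c := 2/(l1+l2) in let q := sqrt (1 - c^2) in
  c^2 + q^2 = 1 /\ (l1+l2)*c - 2 = 0 /\ (-q)^2 = q^2.
Proof.
  intros H c q.
  assert (Hc : 0 < c < 1). { unfold c; split.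
    apply Rdiv_lt_0_compat; lra.
    apply (Rmult_lt_reg_r (l1+l2)); [lra|]. unfold Rdiv. rewrite Rmult_assoc, Rinv_l; lra. }
  assert (Hq : q^2 = 1 - c^2). { unfold q. rewrite <- Rsqr_pow2. apply Rsqr_sqrt. nra. }
  split; [lra|]. split; [|ring]. unfold c. field. lra.
Qed.

Theorem mainTheorem6 (l1 l2 : R) (hl : l1 >= l2) (hl2 : l2 > 0) :
  let D := diag2 l1 l2 in
  (forall Rm : M2,
     critical_SO2 (fun X => W10 X D) Rm <->
     (Rm = mid \/ Rm = mopp mid \/
      (l1 + l2 > 2 /\ (Rm = R3p l1 l2 \/ Rm = R3m l1 l2)))) /\
  W10 mid D = (l1 - 1) ^ 2 + (l2 - 1) ^ 2 /\
  W10 (mopp mid) D = (l1 + 1) ^ 2 + (l2 + 1) ^ 2 /\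
  (l1 + l2 > 2 ->
     W10 (R3p l1 l2) D = 1 / 2 * (l1 - l2) ^ 2 /\
     W10 (R3m l1 l2) D = 1 / 2 * (l1 - l2) ^ 2) /\
  (forall Rm : M2, inSO2 Rm -> W10 Rm D <= W10 (mopp mid) D) /\
  (l1 + l2 <= 2 -> forall Rm : M2, inSO2 Rm -> W10 mid D <= W10 Rm D) /\
  (l1 + l2 > 2 -> forall Rm : M2, inSO2 Rm ->
     W10 (R3p l1 l2) D <= W10 Rm D /\ W10 (R3m l1 l2) D <= W10 Rm D).
Proof.
  intros D. unfold D.
  assert (Wmid : W10 mid (diag2 l1 l2) = (l1 - 1) ^ 2 + (l2 - 1) ^ 2).
  { rewrite mid_eq, Wform by lra. field. }
  assert (Wopp : W10 (mopp mid) (diag2 l1 l2) = (l1 + 1) ^ 2 + (l2 + 1) ^ 2).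
  { rewrite mopp_mid_eq, Wform by lra. field. }
  assert (W3 : l1 + l2 > 2 -> W10 (R3p l1 l2) (diag2 l1 l2) = 1 / 2 * (l1 - l2) ^ 2 /\
     W10 (R3m l1 l2) (diag2 l1 l2) = 1 / 2 * (l1 - l2) ^ 2).
  { intro H. destruct (R3_facts l1 l2 H) as [F1 [F2 F3]].
    unfold R3p; cbv zeta. rewrite R3m_eq. rewrite !Wform by lra.
    rewrite F2. split; field. }
  assert (Wgen : forall Rm, inSO2 Rm -> exists c s, Rm = mkM2 c (-s) s c /\ c^2+s^2 = 1 /\
     W10 Rm (diag2 l1 l2) = (((l1+l2)*c-2)^2 + (l1-l2)^2)/2).
  { intros Rm HR. destruct (so2_form Rm HR) as [E H]. exists (a11 Rm), (a21 Rm).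
    split; [auto|]. split; [auto|]. rewrite E at 1. apply Wform; auto. }
  split; [|split; [exact Wmid|split; [exact Wopp|split; [exact W3|]]]].
  - intro Rm. split.
    + intro Hc. destruct (Wgen Rm (proj1 Hc)) as [c [s [E [H _]]]].
      rewrite E in Hc. apply crit_to in Hc; [|lra].
      destruct (Req_dec s 0) as [Hs|Hs].
      * subst s. assert (Hc2 : (c-1)*(c+1) = 0) by nra.
        apply Rmult_integral in Hc2. destruct Hc2.
        -- left. rewrite E, mid_eq. f_equal; lra.
        -- right; left. rewrite E, mopp_mid_eq. f_equal; lra.
      * assert (Hc3 : (l1+l2)*c - 2 = 0).
        { apply Rmult_integral in Hc. destruct Hc; [contradiction|auto]. }
        assert (Hsig : l1 + l2 > 2).
        { destruct (Rle_dec (l1+l2) 2) as [h|h]; [|lra].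
          exfalso. assert (c >= 1) by nra. assert (s^2 > 0) by (apply pow2_gt_0; auto). nra. }
        right; right. split; [auto|].
        assert (Hcv : c = 2/(l1+l2)) by (field_simplify_eq; lra).
        assert (Hq : 1 - (2/(l1+l2))^2 = s^2) by (rewrite <- Hcv; lra).
        destruct (Rle_dec 0 s) as [h|h].
        -- left. unfold R3p; cbv zeta. rewrite Hq, sqrt_pow2 by auto. rewrite E, Hcv. reflexivity.
        -- right. rewrite R3m_eq. rewrite Hq.
           replace (s^2) with ((-s)^2) by ring. rewrite sqrt_pow2 by lra.
           rewrite E, Hcv. f_equal; ring.
    + intros [H|[H|[Hs [H|H]]]].
      * rewrite H, mid_eq. apply crit_of; lra.
      * rewrite H, mopp_mid_eq. apply crit_of; lra.
      * destruct (R3_facts l1 l2 Hs) as [F1 [F2 F3]].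
        rewrite H. unfold R3p; cbv zeta. apply crit_of; [exact F1|]. rewrite F2; ring.
      * destruct (R3_facts l1 l2 Hs) as [F1 [F2 F3]].
        rewrite H, R3m_eq. apply crit_of; [lra|]. rewrite F2; ring.
  - split; [|split].
    + intros Rm HR. destruct (Wgen Rm HR) as [c [s [_ [H W]]]]. rewrite W, Wopp.
      assert (c <= 1) by nra. assert (-1 <= c) by nra.
      assert (h1 : 0 <= (l1+l2)*(1-c)) by (apply Rmult_le_pos; lra).
      assert (h2 : 0 <= (l1+l2)*(1+c)) by (apply Rmult_le_pos; lra).
      assert (((l1+l2)*c-2)^2 <= (l1+l2+2)^2).
      { apply Rminus_le. replace (((l1+l2)*c-2)^2 - (l1+l2+2)^2) with (-(((l1+l2)*(1-c)+4)*((l1+l2)*(1+c)))) by ring.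
        assert (0 <= ((l1+l2)*(1-c)+4)*((l1+l2)*(1+c))) by (apply Rmult_le_pos; lra). lra. }
      lra.
    + intros Hs Rm HR. destruct (Wgen Rm HR) as [c [s [_ [H W]]]]. rewrite W, Wmid.
      assert (c <= 1) by nra.
      assert (-1 <= c) by nra.
      assert (h1 : 0 <= (l1+l2)*(1-c)) by (apply Rmult_le_pos; lra).
      assert (h2 : (l1+l2)*(c+1) <= 4) by nra.
      assert ((l1+l2-2)^2 <= ((l1+l2)*c-2)^2).
      { apply Rminus_le. replace ((l1+l2-2)^2 - ((l1+l2)*c-2)^2) with (-(((l1+l2)*(1-c))*(4-(l1+l2)*(c+1)))) by ring.
        assert (0 <= ((l1+l2)*(1-c))*(4-(l1+l2)*(c+1))) by (apply Rmult_le_pos; lra). lra. }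
      lra.
    + intros Hs Rm HR. destruct (W3 Hs) as [A B]. rewrite A, B.
      destruct (Wgen Rm HR) as [c [s [_ [H W]]]]. rewrite W.
      assert (0 <= ((l1+l2)*c-2)^2) by apply pow2_ge_0. split; lra.
Qed.
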